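(* In the iAPG setting described in the context, assume $\mu>0$ and $\varepsilon_k=0$ for all $k\ge0$; let $\kappa=\frac{L_g}{\gamma_{\mathrm{dec}}\mu}$ and $C_L=\frac{L_g+L_h}{\sqrt{\underline L}}+\sqrt{\frac{L_g+L_h}{\gamma_{\mathrm{dec}}}}$. Suppose that for each $k\ge0$ a step $\tilde\eta_k$ with $\frac{\gamma_{\mathrm{dec}}}{L_g+L_h}<\tilde\eta_k\le\frac1{\underline L}$ is given and $\tilde x^{(k)}=\mathrm{prox}_{\tilde\eta_k r}\big(x^{(k)}-\tilde\eta_k(\nabla g(x^{(k)})+\nabla h(x^{(k)}))\big)$ satisfies $g(\tilde x^{(k)})+h(\tilde x^{(k)})\le g(x^{(k)})+h(x^{(k)})+\langle\nabla g(x^{(k)})+\nabla h(x^{(k)}),\tilde x^{(k)}-x^{(k)}\rangle+\frac1{2\tilde\eta_k}\|\tilde x^{(k)}-x^{(k)}\|^2$. Then for all $k\ge0$, $$\mathrm{dist}\big(0,\partial F(\tilde x^{(k)})\big)\le C_L\sqrt{2\Big(F(x^{(0)})-F^*+\frac{\gamma_0}{2}\|x^*-z^{(0)}\|^2\Big)}\Big(1-\sqrt{1/\kappa}\Big)^{k/2}.$$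
   Context: iAPG setting. Let $g,h:\mathbb R^n\to\mathbb R$ and $r:\mathbb R^n\to\mathbb R\cup\{+\infty\}$, where $g$ is convex, $\mu$-strongly convex for some $\mu\ge0$, and differentiable with $L_g$-Lipschitz gradient ($L_g>0$); $h$ is convex and differentiable with $L_h$-Lipschitz gradient; $r$ is proper, closed and convex. Put $H=h+r$, $F=g+H$, and assume $F$ attains its minimum value $F^*$ at some point $x^*$. Fix constants $\gamma_{\mathrm{dec}}\in(0,1)$ and $\underline L>0$ with $\mu\le\underline L\le L_g$. We consider points $x^{(k)},z^{(k)},y^{(k)}\in\mathbb R^n$ and scalars $\eta_k>0,\alpha_k>0,\gamma_k>0,\varepsilon_k\ge0$ ($k\ge0$) such that $x^{(0)}=z^{(0)}\in\mathrm{dom}(H)$, $\gamma_0\ge\mu$, and for every $k\ge0$: (i) $\gamma_{\mathrm{dec}}/L_g<\eta_k\le1/\underline L$; (ii) $\gamma_{k+1}=\alpha_k^2/\eta_k=(1-\alpha_k)\gamma_k+\alpha_k\mu$; (iii) $y^{(k)}=\frac{1}{\alpha_k\gamma_k+\gamma_{k+1}}\big(\alpha_k\gamma_k z^{(k)}+\gamma_{k+1}x^{(k)}\big)$; (iv) $\mathrm{dist}\big(0,\ \nabla g(y^{(k)})+\tfrac1{\eta_k}(x^{(k+1)}-y^{(k)})+\partial H(x^{(k+1)})\big)\le\varepsilon_k$; (v) $g(x^{(k+1)})\le g(y^{(k)})+\langle\nabla g(y^{(k)}),x^{(k+1)}-y^{(k)}\rangle+\frac1{2\eta_k}\|x^{(k+1)}-y^{(k)}\|^2$;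 (vi) $z^{(k+1)}=x^{(k)}+\frac1{\alpha_k}(x^{(k+1)}-x^{(k)})$. Here $\partial$ denotes the convex subdifferential and $\mathrm{dist}(0,S)=\inf_{s\in S}\|s\|$. $\mathrm{prox}_{\eta r}(v)=\arg\min_u\{\frac12\|u-v\|^2+\eta r(u)\}$. *)

(* Defs.v *)
From HB Require Import structures.
From mathcomp Require Import all_boot all_order all_algebra.
From mathcomp Require Import all_classical all_reals all_analysis.
Set Implicit Arguments. Unset Strict Implicit. Unset Printing Implicit Defensive.
Import Order.TTheory GRing.Theory Num.Theory.
Local Open Scope classical_set_scope.
Local Open Scope ring_scope.

Section Defs.
Variables (R : realType) (n : nat).
Notation vec := 'rV[R]_n.

Definition dotv (u v : vec) : R := \sum_(i < n) u ord0 i * v ord0 i.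
Definition norm2 (u : vec) : R := Num.sqrt (dotv u u).

Definition convex_fun (f : vec -> R) : Prop :=
  forall x y (t : R), 0 <= t <= 1 ->
    f (t *: x + (1 - t) *: y) <= t * f x + (1 - t) * f y.
Definition strongly_convex (mu : R) (f : vec -> R) : Prop :=
  forall x y (t : R), 0 <= t <= 1 ->
    f (t *: x + (1 - t) *: y)
      <= t * f x + (1 - t) * f y - mu / 2 * t * (1 - t) * norm2 (x - y) ^+ 2.

Definition has_gradient (f : vec -> R) (gf : vec -> vec) : Prop :=
  forall x (e : R), 0 < e -> exists2 d : R, 0 < d &
    forall hv : vec, norm2 hv < d ->
      `| f (x + hv) - f x - dotv (gf x) hv | <= e * norm2 hv.

Definition lipschitz_map (G : vec -> vec) (L : R) : Prop :=
  forall x y, norm2 (G x - G y) <= L * norm2 (x - y).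

(* extended-valued functions R^n -> R ∪ {+oo} *)
Definition no_minfty (f : vec -> \bar R) : Prop := forall x, f x != -oo%E.
Definition proper_fun (f : vec -> \bar R) : Prop :=
  no_minfty f /\ exists x, f x != +oo%E.
(* closed = lower semicontinuous *)
Definition lsc_fun (f : vec -> \bar R) : Prop :=
  forall x (a : R), (a%:E < f x)%E -> exists2 d : R, 0 < d &
    forall y, norm2 (y - x) < d -> (a%:E < f y)%E.
Definition econvex_fun (f : vec -> \bar R) : Prop :=
  forall x y (t : R), 0 < t < 1 ->
    (f (t *: x + (1 - t) *: y)%R <= t%:E * f x + (1 - t)%:E * f y)%E.

Definition subdiff (f : vec -> \bar R) (x : vec) : set vec :=
  [set v | f x \is a fin_num /\
           forall y, (f x + (dotv v (y - x))%:E <= f y)%E].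

(* dist(0,S) = inf_{s in S} ||s|| (= +oo if S is empty) *)
Definition dist0 (S : set vec) : \bar R :=
  ereal_inf [set (norm2 s)%:E | s in S].

Definition is_prox (eta : R) (r : vec -> \bar R) (v u : vec) : Prop :=
  forall w, ((1 / 2 * norm2 (u - v) ^+ 2)%:E + eta%:E * r u
             <= (1 / 2 * norm2 (w - v) ^+ 2)%:E + eta%:E * r w)%E.

End Defs.

(* Main.v *)
Set Warnings "-notation-overridden,-ambiguous-paths,-notation-incompatible-prefix".
Require Import Defs.
From HB Require Import structures.
From mathcomp Require Import all_boot all_order all_algebra.
From mathcomp Require Import all_classical all_reals all_analysis.
From mathcomp Require Import ring lra.
Import Order.TTheory GRing.Theory Num.Theory.
Local Open Scope classical_set_scope.
Local Open Scope ring_scope.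
Set Implicit Arguments. Unset Strict Implicit. Unset Printing Implicit Defensive.

Lemma dotvC (R : realType) (n : nat) (u v : 'rV[R]_n) : dotv u v = dotv v u.
Proof. by rewrite /dotv; apply: eq_bigr => i _; rewrite mulrC. Qed.

Lemma dotvDl (R : realType) (n : nat) (u v w : 'rV[R]_n) :
  dotv (u + v) w = dotv u w + dotv v w.
Proof. by rewrite /dotv -big_split; apply: eq_bigr => i _; rewrite !mxE mulrDl. Qed.

Lemma dotvZl (R : realType) (n : nat) (a : R) (u w : 'rV[R]_n) :
  dotv (a *: u) w = a * dotv u w.
Proof. by rewrite /dotv mulr_sumr; apply: eq_bigr => i _; rewrite !mxE mulrA. Qed.

Lemma dotvNl (R : realType) (n : nat) (u w : 'rV[R]_n) :
  dotv (- u) w = - dotv u w.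
Proof. by rewrite -scaleN1r dotvZl mulN1r. Qed.

Lemma dotvBl (R : realType) (n : nat) (u v w : 'rV[R]_n) :
  dotv (u - v) w = dotv u w - dotv v w.
Proof. by rewrite dotvDl dotvNl. Qed.

Lemma dotvDr (R : realType) (n : nat) (u v w : 'rV[R]_n) :
  dotv w (u + v) = dotv w u + dotv w v.
Proof. by rewrite dotvC dotvDl !(dotvC w). Qed.
Lemma dotvZr (R : realType) (n : nat) (a : R) (u w : 'rV[R]_n) :
  dotv w (a *: u) = a * dotv w u.
Proof. by rewrite dotvC dotvZl dotvC. Qed.
Lemma dotvNr (R : realType) (n : nat) (u w : 'rV[R]_n) :
  dotv w (- u) = - dotv w u.
Proof. by rewrite dotvC dotvNl dotvC. Qed.
Lemma dotvBr (R : realType) (n : nat) (u v w : 'rV[R]_n) :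
  dotv w (u - v) = dotv w u - dotv w v.
Proof. by rewrite dotvDr dotvNr. Qed.
Lemma dotv0l (R : realType) (n : nat) (w : 'rV[R]_n) : dotv 0 w = 0.
Proof. by rewrite -(scale0r (0 : 'rV[R]_n)) dotvZl mul0r. Qed.
Lemma dotv0r (R : realType) (n : nat) (w : 'rV[R]_n) : dotv w 0 = 0.
Proof. by rewrite dotvC dotv0l. Qed.

Lemma dotv_ge0 (R : realType) (n : nat) (u : 'rV[R]_n) : 0 <= dotv u u.
Proof. by rewrite /dotv; apply: sumr_ge0 => i _; rewrite -expr2 sqr_ge0. Qed.

Lemma dotv_eq0 (R : realType) (n : nat) (u : 'rV[R]_n) : dotv u u = 0 -> u = 0.
Proof.
move=> /eqP; rewrite /dotv psumr_eq0; last by move=> i _; rewrite -expr2 sqr_ge0.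
move=> /allP H; apply/rowP => i; rewrite mxE.
have := H i (mem_index_enum _); rewrite /= -expr2 sqrf_eq0 => /eqP //.
Qed.

Lemma norm2_ge0 (R : realType) (n : nat) (u : 'rV[R]_n) : 0 <= norm2 u.
Proof. exact: sqrtr_ge0. Qed.

Lemma norm2_sq (R : realType) (n : nat) (u : 'rV[R]_n) : norm2 u ^+ 2 = dotv u u.
Proof. by rewrite /norm2 sqr_sqrtr // dotv_ge0. Qed.

Lemma CS (R : realType) (n : nat) (u v : 'rV[R]_n) : dotv u v <= norm2 u * norm2 v.
Proof.
have [/dotv_eq0 ->|B0] := eqVneq (dotv v v) 0.
  by rewrite dotv0r mulr_ge0 // norm2_ge0.
have Bp : 0 < dotv v v by rewrite lt0r B0 dotv_ge0.
set A := dotv u u; set B := dotv v v; set C := dotv u v.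
have H := dotv_ge0 (B *: u - C *: v).
rewrite !(dotvBl, dotvBr, dotvZl, dotvZr) -/A -/B -/C (dotvC v u) -/C in H.
have HC : C ^+ 2 <= A * B.
  have : 0 <= B * (A * B - C ^+ 2) by apply: (le_trans H); rewrite le_eqVlt; apply/orP; left; apply/eqP; ring.
  by rewrite pmulr_rge0 // subr_ge0.
rewrite /norm2 -/A -/B -sqrtrM ?dotv_ge0 //.
apply: (le_trans (ler_norm C)); rewrite -sqrtr_sqr; exact: ler_wsqrtr.
Qed.

Lemma norm2D (R : realType) (n : nat) (u v : 'rV[R]_n) : norm2 (u + v) <= norm2 u + norm2 v.
Proof.
rewrite -ler_sqr ?nnegrE ?addr_ge0 ?norm2_ge0 // norm2_sq sqrrD !norm2_sq.
rewrite !(dotvDl, dotvDr) (dotvC v u); have := CS u v; nra.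
Qed.

Lemma norm2Z (R : realType) (n : nat) (a : R) (u : 'rV[R]_n) : norm2 (a *: u) = `|a| * norm2 u.
Proof.
by rewrite /norm2 dotvZl dotvZr mulrA sqrtrM ?sqr_ge0 // -expr2 sqrtr_sqr.
Qed.

Lemma norm2N (R : realType) (n : nat) (u : 'rV[R]_n) : norm2 (- u) = norm2 u.
Proof. by rewrite -scaleN1r norm2Z normrN normr1 mul1r. Qed.

Lemma dotv_le (R : realType) (n : nat) (u v : 'rV[R]_n) (d : R) :
  norm2 u <= d -> dotv u v <= d * norm2 v.
Proof. move=> H; apply: (le_trans (CS u v)); apply: ler_wpM2r => //; exact: norm2_ge0. Qed.

Lemma le_eps (R : realType) (A B : R) : (forall e, 0 < e -> A <= B + e) -> A <= B.
Proof.
move=> H; rewrite leNgt; apply/negP => HBA.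
have := H ((A - B) / 2); rewrite divr_gt0 ?subr_gt0 // => /(_ isT); lra.
Qed.

Lemma lim_aux (R : realType) (A B D M : R) : 0 <= D ->
  (forall e, 0 < e -> exists2 d, 0 < d &
     forall t, 0 < t < 1 -> t * D < d -> A - t * M <= B + e * D) -> A <= B.
Proof.
move=> D0 H; apply: le_eps => ep ep0.
have ep' : 0 < ep / 2 / (D + 1) by rewrite !divr_gt0 // ltr_wpDl.
have [d d0 Hd] := H _ ep'.
set t := Order.min (1/2) (Order.min (d / (D + 1)) (ep / 2 / (`|M| + 1))).
have t12 : t <= 1/2 by rewrite ge_min lexx.
have t2 : t <= d / (D + 1) by rewrite /t !ge_min lexx orbT.
have t3 : t <= ep / 2 / (`|M| + 1) by rewrite /t !ge_min lexx !orbT.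
have t0 : 0 < t by rewrite !lt_min !divr_gt0 // ?ltr_wpDl.
have D1 : 0 < D + 1 by rewrite ltr_wpDl.
have M1 : 0 < `|M| + 1 by rewrite ltr_wpDl.
have Hm := ler_norm M.
have Hm' : - `|M| <= M by rewrite lerNl -normrN ler_norm.
have e1 : t * (D + 1) <= d by rewrite -ler_pdivlMr.
have e2 : t * (`|M| + 1) <= ep / 2 by rewrite -ler_pdivlMr.
have e3 : ep / 2 / (D + 1) * D <= ep / 2.
  rewrite mulrAC ler_pdivrMr //; nra.
have t1 : 0 < t < 1 by apply/andP; split => //; lra.
have tD : t * D < d by nra.
have HH := Hd t t1 tD.
have : t * M <= ep / 2 by nra.
lra.
Qed.

Lemma comb_eq (R : realType) (n : nat) (t : R) (u y : 'rV[R]_n) :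
  t *: u + (1 - t) *: y = y + t *: (u - y).
Proof. by rewrite scalerBl scale1r scalerBr addrCA. Qed.

Lemma fo_sc (R : realType) (n : nat) (g : 'rV[R]_n -> R) gradg mu (y u : 'rV[R]_n) :
  strongly_convex mu g -> has_gradient g gradg ->
  g y + dotv (gradg y) (u - y) + mu / 2 * norm2 (u - y) ^+ 2 <= g u.
Proof.
move=> Hsc Hg.
set D := norm2 (u - y).
suff : dotv (gradg y) (u - y) + mu / 2 * D ^+ 2 <= g u - g y by lra.
apply: (@lim_aux _ _ _ D (mu / 2 * D ^+ 2)); first exact: norm2_ge0.
move=> e e0; have [d d0 Hd] := Hg y e e0; exists d => // t /andP[t0 t1] tD.
have Hn : norm2 (t *: (u - y)) = t * D by rewrite norm2Z ger0_norm ?ltW.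
have := Hd (t *: (u - y)); rewrite Hn => /(_ tD).
rewrite dotvZr => /ler_normlP [H1 _].
have := Hsc u y t; rewrite (ltW t0) (ltW t1) comb_eq => /(_ isT) H2.
rewrite -/D in H2.
have : t * (dotv (gradg y) (u - y) + mu / 2 * D ^+ 2 - t * (mu / 2 * D ^+ 2))
   <= t * (g u - g y + e * D) by nra.
by rewrite ler_pM2l.
Qed.

Lemma convex_sc (R : realType) (n : nat) (g : 'rV[R]_n -> R) :
  convex_fun g -> strongly_convex 0 g.
Proof. by move=> H x y t Ht; rewrite mul0r !mul0r subr0; apply: H. Qed.

Lemma sq_id (R : realType) (n : nat) (A B C : 'rV[R]_n) :
  norm2 (A - B) ^+ 2 + 2 * dotv (A - B) (C - A) = norm2 (C - B) ^+ 2 - norm2 (C - A) ^+ 2.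
Proof.
rewrite !norm2_sq !(dotvBl, dotvBr) (dotvC A B) (dotvC C B) (dotvC C A) (dotvC B A).
ring.
Qed.

Lemma key_scalar (R : realType) (al ga mu et aa ab bb th : R) :
  0 < al <= 1 -> 0 < ga -> 0 <= mu -> 0 < et -> 0 <= bb ->
  al ^+ 2 / et = (1 - al) * ga + al * mu ->
  th = al * ga / (al * ga + al ^+ 2 / et) ->
  (1 / (2 * et) - mu / 2) * (al ^+ 2 * aa - 2 * al * th * ab + th ^+ 2 * bb)
    - mu / 2 * al * (1 - al) * aa
  <= (1 - al) * ga / 2 * (aa - 2 * ab + bb).
Proof.
move=> /andP[al0 al1] ga0 mu0 et0 bb0 E Eth0.
have s0 : 0 < ga + al * mu by rewrite ltr_wpDr // mulr_ge0 // ltW.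
have Einv : 1 / et = ((1 - al) * ga + al * mu) / al ^+ 2.
  by rewrite -E mulrAC divff ?mul1r // expf_neq0 // gt_eqF.
have Eth : th = al * ga / (ga + al * mu) by rewrite Eth0 E; congr (_ / _); ring.
have Hd : 1 / (2 * et) = 1 / et / 2 by rewrite invfM mul1r mulrC mul1r.
rewrite Eth Hd Einv.
set LHS := (X in X <= _).
have -> : LHS = (1 - al) * ga / 2 * (aa - 2 * ab + bb)
                 - (1 - al) * ga * al * mu / (2 * (ga + al * mu)) * bb.
  rewrite /LHS; field; repeat (apply/andP; split); rewrite ?gt_eqF //.
rewrite lerBlDr lerDl; apply: mulr_ge0 => //; apply: divr_ge0.
  apply: mulr_ge0 => //; apply: mulr_ge0; last exact: ltW.
  by apply: mulr_ge0; [rewrite subr_ge0 | exact: ltW].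
by apply: mulr_ge0 => //; apply: ltW.
Qed.

Lemma nsq1 (R : realType) (n : nat) (al th : R) (a b : 'rV[R]_n) :
  norm2 (al *: a - th *: b) ^+ 2 = al ^+ 2 * dotv a a - 2 * al * th * dotv a b + th ^+ 2 * dotv b b.
Proof. rewrite norm2_sq !(dotvBl, dotvBr, dotvZl, dotvZr) (dotvC b a); ring. Qed.

Lemma step (R : realType) (n : nat) (g : 'rV[R]_n -> R) gradg (mu al et ga ga1 : R)
  (xk zk y xk1 zk1 xs : 'rV[R]_n) (Hk Hk1 Hu Hs : R) :
  strongly_convex mu g -> has_gradient g gradg -> 0 <= mu ->
  0 < al <= 1 -> 0 < et -> 0 < ga -> ga1 = al ^+ 2 / et ->
  al ^+ 2 / et = (1 - al) * ga + al * mu ->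
  y = (al * ga + ga1)^-1 *: (al * ga *: zk + ga1 *: xk) ->
  g xk1 <= g y + dotv (gradg y) (xk1 - y) + 1 / (2 * et) * norm2 (xk1 - y) ^+ 2 ->
  zk1 = xk + al^-1 *: (xk1 - xk) ->
  Hu <= al * Hs + (1 - al) * Hk ->
  (forall d, 0 < d -> exists w, Hk1 + dotv w ((al *: xs + (1 - al) *: xk) - xk1) <= Hu /\
        norm2 (gradg y + et^-1 *: (xk1 - y) + w) < d) ->
  g xk1 + Hk1 - (g xs + Hs) + ga1 / 2 * norm2 (xs - zk1) ^+ 2
  <= (1 - al) * (g xk + Hk - (g xs + Hs) + ga / 2 * norm2 (xs - zk) ^+ 2).
Proof.
move=> Hsc Hgr mu0 /andP[al0 al1] et0 ga0 Ega1 E Ey Hdesc Ez HHu Hsub.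
set u := al *: xs + (1 - al) *: xk.
set p := gradg y.
have gu : g u <= al * g xs + (1 - al) * g xk - mu / 2 * al * (1 - al) * norm2 (xs - xk) ^+ 2.
  by apply: Hsc; rewrite ltW ?al1.
have fo := fo_sc y u Hsc Hgr; rewrite -/p in fo.
have gae : al * ga + ga1 = ga + al * mu by rewrite Ega1 E; ring.
have s0 : 0 < ga + al * mu by rewrite ltr_wpDr // mulr_ge0 // ltW.
set th := al * ga / (al * ga + al ^+ 2 / et).
have Vuy : u - y = al *: (xs - xk) - th *: (zk - xk).
  rewrite Ey /th -Ega1; apply/rowP => i; rewrite !mxE.
  by field; rewrite gae gt_eqF.
have Vux : u - xk1 = al *: (xs - zk1).
  rewrite Ez; apply/rowP => i; rewrite !mxE; field; rewrite gt_eqF //.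
have Vxz : xs - zk = (xs - xk) - (zk - xk).
  by apply/rowP => i; rewrite !mxE; ring.
move: Vuy Vxz gu; set a := xs - xk; set b := zk - xk; clearbody a b => Vuy Vxz gu.
have N1 : norm2 (u - y) ^+ 2 = al ^+ 2 * dotv a a - 2 * al * th * dotv a b + th ^+ 2 * dotv b b.
  by rewrite Vuy nsq1.
have N2 : norm2 (xs - zk) ^+ 2 = dotv a a - 2 * dotv a b + dotv b b.
  by rewrite Vxz -(scale1r a) -(scale1r b) nsq1 !dotvZl !dotvZr; ring.
have N3 : norm2 (u - xk1) ^+ 2 = al ^+ 2 * norm2 (xs - zk1) ^+ 2.
  by rewrite Vux norm2Z exprMn ger0_norm // ltW.
have alb : 0 < al <= 1 by rewrite al0 al1.
have K := key_scalar (dotv a a) (dotv a b) alb ga0 mu0 et0 (dotv_ge0 b) E (erefl th).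
rewrite -/th in K.
have Haa : norm2 a ^+ 2 = dotv a a by rewrite norm2_sq.
have SQ := sq_id xk1 y u.
have Hpi : dotv p (u - y) = dotv p (u - xk1) + dotv p (xk1 - y).
  by rewrite !dotvBr; ring.
set M := norm2 (u - xk1).
have M0 : 0 <= M := norm2_ge0 _.
apply: le_eps => ep ep0.
have dp : 0 < ep / (M + 1) by rewrite divr_gt0 // ltr_wpDl.
have [w [Hw Hwn]] := Hsub _ dp.
set e := p + et^-1 *: (xk1 - y) + w.
have Ew : w = e - p - et^-1 *: (xk1 - y) by rewrite /e; apply/rowP => i; rewrite !mxE; ring.
have He : - dotv e (u - xk1) <= ep.
  have Hn : norm2 (- e) <= ep / (M + 1) by rewrite norm2N; exact: ltW.
  rewrite -dotvNl; apply: (le_trans (dotv_le (u - xk1) Hn)).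
  rewrite -/M mulrAC ler_pdivrMr ?ltr_wpDl // ler_wpM2l ?ltW //; lra.
rewrite Ew !dotvBl dotvZl in Hw.
have Hd2 : 1 / (2 * et) = et^-1 / 2 by rewrite mul1r invfM mulrC.
rewrite Hd2 in Hdesc K.
rewrite -/M in N3.
have E2 : et^-1 / 2 * al ^+ 2 = ga1 / 2.
  by rewrite Ega1; field; rewrite gt_eqF.
set c := et^-1 / 2.
set Q1 := norm2 (xk1 - y) ^+ 2.
set Q2 := norm2 (u - y) ^+ 2.
set D := dotv (xk1 - y) (u - xk1).
set Z := norm2 (xs - zk1) ^+ 2.
have F1 : c * (Q1 + 2 * D) = c * Q2 - c * M ^+ 2.
  by rewrite SQ /Q2 /M; ring.
have F2 : c * M ^+ 2 = ga1 / 2 * Z by rewrite N3 mulrA E2.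
have F3 : (c - mu / 2) * Q2 - mu / 2 * al * (1 - al) * dotv a a
     <= (1 - al) * ga / 2 * norm2 (xs - zk) ^+ 2 by rewrite /Q2 N1 N2.
have F4 : et^-1 * D = 2 * c * D.
  by rewrite /c [2 * _]mulrC mulfVK // pnatr_eq0.
rewrite Haa in gu.
have F5 : (c - mu / 2) * Q2 = c * Q2 - mu / 2 * Q2 by ring.
have F6 : c * (Q1 + 2 * D) = c * Q1 + 2 * c * D by ring.
have T1 : g xk1 <= g y + dotv (gradg y) (xk1 - y) + c * Q1 := Hdesc.
have T2 : g y + dotv (gradg y) (u - y) + mu / 2 * Q2 <= g u := fo.
have T3 : Hk1 + (dotv e (u - xk1) - dotv (gradg y) (u - xk1) - et^-1 * D) <= Hu := Hw.
have T4 : dotv (gradg y) (u - y) = dotv (gradg y) (u - xk1) + dotv (gradg y) (xk1 - y) := Hpi.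
have T5 : - dotv e (u - xk1) <= ep := He.
have T6 : c * (Q1 + 2 * D) = c * Q2 - c * M ^+ 2 := F1.
have T7 : g u <= al * g xs + (1 - al) * g xk - mu / 2 * al * (1 - al) * dotv a a := gu.
have T8 : Hu <= al * Hs + (1 - al) * Hk := HHu.
have T9 : c * M ^+ 2 = ga1 / 2 * Z := F2.
have T10 : (c - mu / 2) * Q2 - mu / 2 * al * (1 - al) * dotv a a
     <= (1 - al) * ga / 2 * norm2 (xs - zk) ^+ 2 := F3.
have T11 : et^-1 * D = 2 * c * D := F4.
clear -T1 T2 T3 T4 T5 T6 T7 T8 T9 T10 T11 F5 F6.
lra.
Qed.

Lemma dist0_small (R : realType) (n : nat) (S : set 'rV[R]_n) :
  (dist0 S <= 0%:E)%E -> forall d, 0 < d -> exists s, S s /\ norm2 s < d.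
Proof.
move=> H d d0.
have : (dist0 S < d%:E)%E by apply: (le_lt_trans H); rewrite lte_fin.
move=> /ereal_inf_lt [_ [s Ss <-]]; rewrite lte_fin => Hs.
by exists s.
Qed.

Lemma dist0_le (R : realType) (n : nat) (S : set 'rV[R]_n) s :
  S s -> (dist0 S <= (norm2 s)%:E)%E.
Proof. by move=> Ss; apply: ge_ereal_inf; exists (norm2 s)%:E => //; exists s. Qed.

Lemma fin_le (R : realType) (x : \bar R) (y : R) : x != -oo%E -> (x <= y%:E)%E -> x \is a fin_num.
Proof. by case: x. Qed.

Lemma nsq2 (R : realType) (n : nat) (t : R) (A B : 'rV[R]_n) :
  norm2 (A + t *: B) ^+ 2 = norm2 A ^+ 2 + 2 * t * dotv A B + t ^+ 2 * norm2 B ^+ 2.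
Proof. rewrite !norm2_sq !(dotvDl, dotvDr, dotvZl, dotvZr) (dotvC B A); ring. Qed.

Lemma prox_sub (R : realType) (n : nat) (r : 'rV[R]_n -> \bar R) (et : R) v xt :
  0 < et -> no_minfty r -> econvex_fun r -> is_prox et r v xt -> r xt \is a fin_num ->
  forall w, r w \is a fin_num ->
  fine (r xt) + dotv (et^-1 *: (v - xt)) (w - xt) <= fine (r w).
Proof.
move=> et0 Hnm Hcv Hpx Hxt w Hw.
set a := fine (r xt); set b := fine (r w).
suff : et * a + dotv (v - xt) (w - xt) <= et * b.
  rewrite dotvZl => H; rewrite -(ler_pM2l et0) mulrDr mulrA divff ?mul1r ?gt_eqF //.
apply: (@lim_aux _ _ _ 0 (norm2 (w - xt) ^+ 2 / 2)) => // e e0.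
exists 1 => // t /andP[t0 t1] _.
set wt := t *: w + (1 - t) *: xt.
have Hc : (r wt <= (t * b + (1 - t) * a)%:E)%E.
  have tt : 0 < t < 1 by rewrite t0 t1.
  have := Hcv w xt t tt.
  by rewrite -(fineK Hw) -(fineK Hxt) -!EFinM -EFinD.
have Hwt : r wt \is a fin_num by apply: fin_le Hc; apply: Hnm.
set c := fine (r wt).
have Hc' : c <= t * b + (1 - t) * a by rewrite -lee_fin /c fineK.
have Hp := Hpx wt.
rewrite -(fineK Hwt) -(fineK Hxt) -!EFinM -!EFinD lee_fin -/a -/c in Hp.
have Vw : wt - v = (xt - v) + t *: (w - xt).
  by apply/rowP => i; rewrite !mxE; ring.
have Nw : norm2 (wt - v) ^+ 2 = norm2 (xt - v) ^+ 2 + 2 * t * dotv (xt - v) (w - xt)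
     + t ^+ 2 * norm2 (w - xt) ^+ 2.
  by rewrite Vw nsq2.
rewrite Nw in Hp.
have Hn : dotv (xt - v) (w - xt) = - dotv (v - xt) (w - xt).
  by rewrite -dotvNl opprB.
rewrite Hn in Hp.
have Hec : et * c <= et * (t * b + (1 - t) * a) by rewrite ler_pM2l.
have : t * (et * a + dotv (v - xt) (w - xt) - t * (norm2 (w - xt) ^+ 2 / 2))
       <= t * (et * b + e * 0) by nra.
by rewrite ler_pM2l.
Qed.

Lemma Hconv (R : realType) (n : nat) (h : 'rV[R]_n -> R) (r : 'rV[R]_n -> \bar R)
  (xs xk u : 'rV[R]_n) (al : R) :
  convex_fun h -> econvex_fun r -> no_minfty r -> r xs \is a fin_num ->
  r xk \is a fin_num -> 0 < al <= 1 -> u = al *: xs + (1 - al) *: xk ->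
  r u \is a fin_num /\
  h u + fine (r u) <= al * (h xs + fine (r xs)) + (1 - al) * (h xk + fine (r xk)).
Proof.
move=> Hh Hr Hnm Hxs Hxk /andP[al0 al1] ->.
have [->|alne] := eqVneq al 1.
  have -> : 1 *: xs + (1 - 1) *: xk = xs.
    by apply/rowP => i; rewrite !mxE; ring.
  by split => //; rewrite subrr mul0r addr0 mul1r.
have al1' : al < 1 by rewrite lt_neqAle alne.
have Hc : (r (al *: xs + (1 - al) *: xk)%R <= (al * fine (r xs) + (1 - al) * fine (r xk))%:E)%E.
  have tt : 0 < al < 1 by rewrite al0 al1'.
  have := Hr xs xk al tt.
  by rewrite -(fineK Hxs) -(fineK Hxk) -!EFinM -EFinD.
have Hf : r (al *: xs + (1 - al) *: xk)%R \is a fin_num by apply: fin_le Hc; apply: Hnm.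
split => //.
have Hc' : fine (r (al *: xs + (1 - al) *: xk)) <= al * fine (r xs) + (1 - al) * fine (r xk).
  by rewrite -lee_fin fineK.
have Hh' := Hh xs xk al; rewrite (ltW al0) al1 /= in Hh'.
have := Hh' isT; lra.
Qed.

Lemma final_arith (R : realType) (L et Lbar gdec d P ns : R) :
  0 < gdec -> 0 < L -> 0 < Lbar -> gdec / L < et -> et <= 1 / Lbar -> 0 <= d -> 0 <= P ->
  d ^+ 2 <= 2 * et * P -> ns <= (L + et^-1) * d ->
  ns <= (L / Num.sqrt Lbar + Num.sqrt (L / gdec)) * Num.sqrt (2 * P).
Proof.
move=> g0 L0 Lb0 etl etu d0 P0 Hd Hns.
have et0 : 0 < et by apply: le_lt_trans etl; rewrite divr_ge0 // ltW.
set sg := Num.sqrt et; set la := Num.sqrt Lbar; set rh := Num.sqrt (L / gdec).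
have sg0 : 0 < sg by rewrite sqrtr_gt0.
have la0 : 0 < la by rewrite sqrtr_gt0.
have rh0 : 0 <= rh by rewrite sqrtr_ge0.
have sg2 : sg ^+ 2 = et by rewrite sqr_sqrtr // ltW.
have la2 : la ^+ 2 = Lbar by rewrite sqr_sqrtr // ltW.
have rh2 : rh ^+ 2 = L / gdec by rewrite sqr_sqrtr // divr_ge0 // ltW.
have eLb : et * Lbar <= 1 by rewrite -ler_pdivlMr // mul1r.
have eLg : 1 <= et * (L / gdec).
  have h1 : gdec <= et * L by move: etl; rewrite ltr_pdivrMr // => /ltW.
  by rewrite mulrA ler_pdivlMr // mul1r.
have sl : sg * la <= 1.
  have : (sg * la) ^+ 2 <= 1 by rewrite exprMn sg2 la2.
  have : 0 <= sg * la by rewrite mulr_ge0 // ltW.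
  nra.
have sr : 1 <= sg * rh.
  have : 1 <= (sg * rh) ^+ 2 by rewrite exprMn sg2 rh2.
  have : 0 <= sg * rh by rewrite mulr_ge0 // ltW.
  nra.
have Hdd : d <= sg * Num.sqrt (2 * P).
  have H2 : d ^+ 2 <= et * (2 * P) by rewrite mulrA (mulrC et).
  have Ed : d = Num.sqrt (d ^+ 2) by rewrite sqrtr_sqr ger0_norm.
  rewrite -sqrtrM; last exact: ltW.
  rewrite {1}Ed; exact: ler_wsqrtr.
have S2 : 0 <= Num.sqrt (2 * P) := sqrtr_ge0 _.
have C1 : (L + et^-1) * sg <= L / la + rh.
  have e1 : L * sg <= L / la by rewrite ler_pdivlMr // -mulrA ger_pMr.
  have e2 : et^-1 * sg <= rh.
    have -> : et^-1 * sg = 1 / sg.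
      by rewrite -sg2 expr2 invfM -mulrA mulVf ?mulr1 ?mul1r // gt_eqF.
    by rewrite ler_pdivrMr // mulrC.
  rewrite mulrDl; lra.
apply: (le_trans Hns).
apply: (@le_trans _ _ ((L + et^-1) * (sg * Num.sqrt (2 * P)))).
  by apply: ler_wpM2l => //; rewrite addr_ge0 ?invr_ge0 ?ltW.
by rewrite mulrA; apply: ler_wpM2r.
Qed.
Theorem theorem3p7 (R : realType) (n : nat)
  (g h : 'rV[R]_n -> R) (r : 'rV[R]_n -> \bar R)
  (gradg gradh : 'rV[R]_n -> 'rV[R]_n)
  (mu Lg Lh gdec Lbar Fstar : R) (xstar : 'rV[R]_n)
  (x z y xt : nat -> 'rV[R]_n) (eta alpha gamma eps etat : nat -> R) :
  (* standing assumptions on g, h, r *)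
  convex_fun g -> 0 <= mu -> strongly_convex mu g ->
  has_gradient g gradg -> 0 < Lg -> lipschitz_map gradg Lg ->
  convex_fun h -> has_gradient h gradh -> 0 <= Lh -> lipschitz_map gradh Lh ->
  proper_fun r -> lsc_fun r -> econvex_fun r ->
  (* F = g + h + r attains its minimum F* at xstar *)
  ((g xstar + h xstar)%:E + r xstar = Fstar%:E)%E ->
  (forall u, (Fstar%:E <= (g u + h u)%:E + r u)%E) ->
  (* constants *)
  0 < gdec < 1 -> 0 < Lbar -> mu <= Lbar -> Lbar <= Lg ->
  (* iAPG iterates *)
  x 0%N = z 0%N -> r (x 0%N) != +oo%E -> mu <= gamma 0%N ->
  (forall k, 0 < eta k /\ 0 < alpha k /\ 0 < gamma k /\ 0 <= eps k) ->
  (forall k, gdec / Lg < eta k <= 1 / Lbar) ->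
  (forall k, gamma k.+1 = alpha k ^+ 2 / eta k /\
             alpha k ^+ 2 / eta k = (1 - alpha k) * gamma k + alpha k * mu) ->
  (forall k, y k = (alpha k * gamma k + gamma k.+1)^-1 *:
                   (alpha k * gamma k *: z k + gamma k.+1 *: x k)) ->
  (forall k, (dist0 [set v | exists2 w,
                 w \in subdiff (fun u => (h u)%:E + r u) (x k.+1) &
                 v = (gradg (y k) + (eta k)^-1 *: (x k.+1 - y k) + w)%R]
              <= (eps k)%:E)%E) ->
  (forall k, g (x k.+1) <= g (y k) + dotv (gradg (y k)) (x k.+1 - y k)
                           + 1 / (2 * eta k) * norm2 (x k.+1 - y k) ^+ 2) ->
  (forall k, z k.+1 = x k + (alpha k)^-1 *: (x k.+1 - x k)) ->
  (* theorem-specific assumptions *)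
  0 < mu -> (forall k, eps k = 0) ->
  (forall k, gdec / (Lg + Lh) < etat k <= 1 / Lbar) ->
  (forall k, is_prox (etat k) r
                (x k - etat k *: (gradg (x k) + gradh (x k))) (xt k)) ->
  (forall k, g (xt k) + h (xt k)
             <= g (x k) + h (x k) + dotv (gradg (x k) + gradh (x k)) (xt k - x k)
                + 1 / (2 * etat k) * norm2 (xt k - x k) ^+ 2) ->
  let kappa := Lg / (gdec * mu) in
  let CL := (Lg + Lh) / Num.sqrt Lbar + Num.sqrt ((Lg + Lh) / gdec) in
  forall k,
    (dist0 (subdiff (fun u => (g u + h u)%:E + r u) (xt k))
     <= (CL * Num.sqrt (2 * (g (x 0%N) + h (x 0%N) + fine (r (x 0%N)) - Fstar
                             + gamma 0%N / 2 * norm2 (xstar - z 0%N) ^+ 2))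
            * powR (1 - Num.sqrt (1 / kappa)) (k%:R / 2))%:E)%E.
Proof.
move=> Hgc Hmu0 Hsc Hgg HLg Hlipg Hhc Hhg HLh Hliph [Hnm Hpr] Hlsc Hrc HFs Hmin
  Hgdec HLbar Hmub HLbg Hx0 Hr0 Hga0 Hpos Heta Hgam Hy Hdist Hdesc Hz Hmu Heps
  Hetat Hprox Hdesct kappa CL.
have [gd0 gd1] : 0 < gdec /\ gdec < 1 by move/andP: Hgdec.
have rxs : r xstar \is a fin_num.
  have : ((g xstar + h xstar)%:E + r xstar)%E \is a fin_num by rewrite HFs.
  by rewrite fin_numD => /andP[].
have EFs : Fstar = g xstar + h xstar + fine (r xstar).
  apply/eqP; rewrite -(@eqe R) -HFs -(fineK rxs) -EFinD //.
have Hga : forall k, mu <= gamma k.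
  elim=> [//|k IH].
  have [e0 [a0 [g0 _]]] := Hpos k.
  have [E1 E2] := Hgam k.
  have [_ eL] := andP (Heta k).
  have emu : eta k * mu <= 1.
    have : eta k * mu <= eta k * Lbar by rewrite ler_pM2l.
    have : eta k * Lbar <= 1 by rewrite -ler_pdivlMr // mul1r.
    lra.
  have Ha2 : alpha k ^+ 2 = eta k * ((1 - alpha k) * gamma k + alpha k * mu).
    by rewrite -E2 mulrC divfK // gt_eqF.
  have al1 : alpha k <= 1.
    rewrite leNgt; apply/negP => al1.
    have : (1 - alpha k) * (gamma k - mu) <= 0.
      by rewrite nmulr_rle0 ?subr_ge0 // subr_lt0.
    move=> H.
    have : alpha k ^+ 2 <= eta k * mu.
      rewrite Ha2 ler_pM2l //; lra.
    nra.
  rewrite E1 E2; nra.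
have Hal1 : forall k, alpha k <= 1.
  move=> k.
  have [e0 [a0 [g0 _]]] := Hpos k.
  have [E1 E2] := Hgam k.
  have [_ eL] := andP (Heta k).
  have emu : eta k * mu <= 1.
    have : eta k * mu <= eta k * Lbar by rewrite ler_pM2l.
    have : eta k * Lbar <= 1 by rewrite -ler_pdivlMr // mul1r.
    lra.
  have Ha2 : alpha k ^+ 2 = eta k * ((1 - alpha k) * gamma k + alpha k * mu).
    by rewrite -E2 mulrC divfK // gt_eqF.
  rewrite leNgt; apply/negP => al1.
  have H : (1 - alpha k) * (gamma k - mu) <= 0.
    by rewrite nmulr_rle0 ?subr_ge0 ?Hga // subr_lt0.
  have : alpha k ^+ 2 <= eta k * mu.
    rewrite Ha2 ler_pM2l //; lra.
  nra.
have Hsubk : forall k d, 0 < d -> exists w,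
    (((h (x k.+1))%:E + r (x k.+1))%E \is a fin_num /\
     forall yv, ((h (x k.+1))%:E + r (x k.+1) + (dotv w (yv - x k.+1))%:E
                 <= (h yv)%:E + r yv)%E) /\
    norm2 (gradg (y k) + (eta k)^-1 *: (x k.+1 - y k) + w) < d.
  move=> k d d0.
  have := Hdist k; rewrite Heps => /dist0_small /(_ d d0) [s [[w Hw ->] Hs]].
  by exists w; split => //; move: Hw; rewrite inE.
have rfin : forall k, r (x k) \is a fin_num.
  case=> [|k]; first by rewrite fin_numE Hr0 Hnm.
  have [w [[Hf _] _]] := Hsubk k 1 ltr01.
  by move: Hf; rewrite fin_numD => /andP[].
pose Fv (p : 'rV[R]_n) := g p + h p + fine (r p).
pose Phi k := Fv (x k) - Fstar + gamma k / 2 * norm2 (xstar - z k) ^+ 2.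
have Hstep : forall k, Phi k.+1 <= (1 - alpha k) * Phi k.
  move=> k.
  have [e0 [a0 [g0 _]]] := Hpos k.
  have [E1 E2] := Hgam k.
  have alb : 0 < alpha k <= 1 by rewrite a0 Hal1.
  set u := alpha k *: xstar + (1 - alpha k) *: x k.
  have [ruf Hu] := Hconv Hhc Hrc Hnm rxs (rfin k) alb (erefl u).
  have := @step R n g gradg mu (alpha k) (eta k) (gamma k) (gamma k.+1)
     (x k) (z k) (y k) (x k.+1) (z k.+1) xstar
     (h (x k) + fine (r (x k))) (h (x k.+1) + fine (r (x k.+1)))
     (h u + fine (r u)) (h xstar + fine (r xstar))
     Hsc Hgg Hmu0 alb e0 g0 E1 E2 (Hy k) (Hdesc k) (Hz k) Hu.
  have Hsub : forall d, 0 < d -> exists w,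
     h (x k.+1) + fine (r (x k.+1)) + dotv w (alpha k *: xstar + (1 - alpha k) *: x k - x k.+1)
       <= h u + fine (r u) /\
     norm2 (gradg (y k) + (eta k)^-1 *: (x k.+1 - y k) + w) < d.
    move=> d d0; have [w [[_ Hw] Hn]] := Hsubk k d d0.
    exists w; split => //.
    have := Hw u.
    by rewrite -(fineK ruf) -(fineK (rfin k.+1)) -!EFinD lee_fin.
  move=> /(_ Hsub).
  rewrite /Phi /Fv EFs; lra.
have Phi0 : forall k, 0 <= Phi k.
  move=> k; have [_ [_ [g0 _]]] := Hpos k.
  have := Hmin (x k); rewrite -(fineK (rfin k)) -EFinD lee_fin => HF.
  rewrite /Phi /Fv; have := sqr_ge0 (norm2 (xstar - z k)).
  have : 0 < gamma k / 2 by rewrite divr_gt0.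
  nra.
set q := Num.sqrt (1 / kappa).
have Hq : forall k, q <= alpha k.
  move=> k; have [e0 [a0 [g0 _]]] := Hpos k.
  have [E1 E2] := Hgam k.
  have [eL _] := andP (Heta k).
  have Ha2 : alpha k ^+ 2 = eta k * gamma k.+1 by rewrite E1 mulrC divfK // gt_eqF.
  have H1 : 1 / kappa <= alpha k ^+ 2.
    rewrite Ha2 /kappa.
    have -> : 1 / (Lg / (gdec * mu)) = gdec / Lg * mu.
      by field; rewrite !gt_eqF.
    apply: (@le_trans _ _ (eta k * mu)).
      by rewrite ler_pM2r // ltW.
    by rewrite ler_pM2l.
  rewrite /q -(ger0_norm (ltW a0)) -sqrtr_sqr; exact: ler_wsqrtr.
have Hq1 : 0 <= 1 - q by have := Hq 0%N; have := Hal1 0%N; lra.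
have Hdec : forall k, Phi k <= (1 - q) ^+ k * Phi 0%N.
  elim=> [|k IH]; first by rewrite expr0 mul1r.
  apply: (le_trans (Hstep k)).
  apply: (@le_trans _ _ ((1 - q) * Phi k)).
    by apply: ler_wpM2r => //; have := Hq k; lra.
  by rewrite exprS -mulrA ler_wpM2l.
move=> k.
have [etl etu] := andP (Hetat k).
have L0 : 0 < Lg + Lh by rewrite ltr_wpDr.
have et0 : 0 < etat k by apply: le_lt_trans etl; rewrite divr_ge0 // ltW.
have rxt : r (xt k) \is a fin_num.
  have := Hprox k (x k); have := Hnm (xt k).
  rewrite -(fineK (rfin k)) -EFinM -EFinD.
  case: (r (xt k)) => [c| |] // _.
  by rewrite mulry gtr0_sg // mul1e addey // leye_eq.
have sub := prox_sub et0 Hnm Hrc (Hprox k) rxt.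
set v := x k - etat k *: (gradg (x k) + gradh (x k)).
set s := gradg (xt k) + gradh (xt k) + (etat k)^-1 *: (v - xt k).
have Hs : subdiff (fun u => ((g u + h u)%:E + r u)%E) (xt k) s.
  split; first by rewrite fin_numD rxt andbT.
  move=> w; case Erw: (r w) => [c| |].
  - have Hrw : r w \is a fin_num by rewrite Erw.
    have := sub w Hrw; rewrite Erw /= => Hsw.
    rewrite -(fineK rxt) -!EFinD lee_fin.
    have fg := fo_sc (xt k) w Hsc Hgg.
    have fh := fo_sc (xt k) w (convex_sc Hhc) Hhg.
    rewrite /s !dotvDl.
    have := sqr_ge0 (norm2 (w - xt k)).
    have := Hmu0; nra.
  - by rewrite leey.
  - by move: (Hnm w); rewrite Erw.
apply: (le_trans (dist0_le Hs)); rewrite lee_fin.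
set d := norm2 (xt k - x k).
have d0 : 0 <= d := norm2_ge0 _.
have V1 : (etat k)^-1 *: (v - xt k) = (etat k)^-1 *: (x k - xt k) - (gradg (x k) + gradh (x k)).
  by apply/rowP => i; rewrite !mxE; field; rewrite gt_eqF.
have Vs : s = (gradg (xt k) - gradg (x k) + (gradh (xt k) - gradh (x k)))
              + (- ((etat k)^-1 *: (xt k - x k))).
  by rewrite /s V1; apply/rowP => i; rewrite !mxE; field; rewrite gt_eqF.
have Hns : norm2 s <= (Lg + Lh + (etat k)^-1) * d.
  rewrite Vs; apply: (le_trans (norm2D _ _)).
  rewrite norm2N norm2Z ger0_norm; last by rewrite invr_ge0 ltW.
  have H1 : norm2 (gradg (xt k) - gradg (x k) + (gradh (xt k) - gradh (x k))) <= Lg * d + Lh * d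
    := le_trans (norm2D _ _) (lerD (Hlipg (xt k) (x k)) (Hliph (xt k) (x k))).
  have H2 : (etat k)^-1 * norm2 (xt k - x k) = (etat k)^-1 * d by [].
  lra.
have HFx : Fstar <= Fv (xt k).
  by have := Hmin (xt k); rewrite -(fineK rxt) -EFinD lee_fin.
have Hsk := sub (x k) (rfin k).
rewrite V1 dotvBl dotvZl in Hsk.
have Ed1 : dotv (x k - xt k) (x k - xt k) = d ^+ 2.
  by rewrite /d -norm2N opprB norm2_sq.
have Ed2 : dotv (gradg (x k) + gradh (x k)) (x k - xt k)
           = - dotv (gradg (x k) + gradh (x k)) (xt k - x k).
  by rewrite -dotvNr opprB.
rewrite Ed1 Ed2 in Hsk.
have Hdk := Hdesct k; rewrite -/d in Hdk.
have Hd2 : 1 / (2 * etat k) * d ^+ 2 <= Fv (x k) - Fstar.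
  rewrite /Fv; have : (etat k)^-1 * d ^+ 2 = 2 * (1 / (2 * etat k) * d ^+ 2).
    by field; rewrite gt_eqF.
  move: HFx; rewrite /Fv; lra.
have HPk : Fv (x k) - Fstar <= (1 - q) ^+ k * Phi 0%N.
  apply: le_trans (Hdec k); rewrite /Phi lerDl.
  have [_ [_ [g0 _]]] := Hpos k.
  by rewrite mulr_ge0 ?sqr_ge0 // divr_ge0 // ltW.
have Hdd : d ^+ 2 <= 2 * etat k * ((1 - q) ^+ k * Phi 0%N).
  have : d ^+ 2 = 2 * etat k * (1 / (2 * etat k) * d ^+ 2) by field; rewrite gt_eqF.
  move=> ->; rewrite ler_pM2l ?mulr_gt0 //; lra.
have HP0 : 0 <= (1 - q) ^+ k * Phi 0%N by rewrite mulr_ge0 ?exprn_ge0.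
have Hfin := final_arith gd0 L0 HLbar etl etu d0 HP0 Hdd Hns.
have Epow : powR (1 - q) (k%:R / 2) = Num.sqrt ((1 - q) ^+ k).
  by rewrite powRrM powR_mulrn // powR12_sqrt // exprn_ge0.
rewrite -/q Epow -mulrA -sqrtrM ?mulr_ge0 ?Phi0 //.
have -> : 2 * (g (x 0%N) + h (x 0%N) + fine (r (x 0%N)) - Fstar +
     gamma 0%N / 2 * norm2 (xstar - z 0%N) ^+ 2) * (1 - q) ^+ k
     = 2 * ((1 - q) ^+ k * Phi 0%N) by rewrite /Phi /Fv; ring.
exact: Hfin.
Qed.
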